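(* Under the standing setting and assumptions (A1)–(A3) described in the context, assume $\mathcal R(X)\neq\emptyset$ for all $X\in\mathcal X$ and that for any distinct $X,Y\in\partial\mathcal A$ with $X-Y\in\ker(\pi)$ there exists $\lambda\in(0,1)$ with $\lambda X+(1-\lambda)Y\in\mathrm{int}\,\mathcal A$. Then $|\mathcal R(X)|=1$ for all $X\in\mathcal X$.
   Context: Let $\mathcal X$ be a Hausdorff, first countable, locally convex topological vector space over $\mathbb R$, partially ordered by a partial order $\geq$ with positive cone $\mathcal X_+=\{X\in\mathcal X: X\geq 0\}$. Let $\mathcal M\subset\mathcal X$ be a vector subspace with $1<\dim\mathcal M<\infty$, carrying the relative topology, and let $\pi:\mathcal M\to\mathbb R$ be linear with $\ker(\pi)=\{Z\in\mathcal M:\pi(Z)=0\}$. Standing assumptions: (A1) there is $U\in\mathcal M\cap\mathcal X_+$ with $\pi(U)=1$; (A2) $\mathcal A\subsetneq\mathcal X$ is closed, contains $0$, and satisfies $\mathcal A+\mathcal X_+\subset\mathcal A$; (A3) the map $\rho(X)=\inf\{\pi(Z): Z\in\mathcal M,\ X+Z\in\mathcal A\}$ is finitely valued and continuous on $\mathcal X$. The optimal payoff map is $\mathcal R(X)=\{Z\in\mathcal M: X+Z\in\mathcal A,\ \pi(Z)=\rho(X)\}$; $|\cdot|$ is cardinality. $\partial$ and $\mathrm{int}$ denote boundary and interior in $\mathcal X$. *)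

(* Defs.v *)
From HB Require Import structures.
From mathcomp Require Import all_boot all_order all_algebra.
From mathcomp Require Import all_classical all_reals all_analysis.
Set Implicit Arguments. Unset Strict Implicit. Unset Printing Implicit Defensive.
Import Order.TTheory GRing.Theory Num.Theory.
Local Open Scope classical_set_scope.
Local Open Scope ring_scope.

Definition first_countable (T : topologicalType) : Prop :=
  forall x : T, exists B : nat -> set T,
    (forall n, nbhs x (B n)) /\ (forall U, nbhs x U -> exists n, B n `<=` U).

Definition partial_order {T : Type} (ge : T -> T -> Prop) : Prop :=
  (forall x, ge x x) /\ (forall x y, ge x y -> ge y x -> x = y) /\
  (forall x y z, ge x y -> ge y z -> ge x z).

Definition pos_cone {R : numDomainType} {E : lmodType R} (ge : E -> E -> Prop)
  : set E := [set X | ge X 0].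

Definition is_subspace {R : numDomainType} {E : lmodType R} (M : set E) : Prop :=
  M 0 /\ (forall (a : R) x y, M x -> M y -> M (a *: x + y)).

Definition has_dim {R : numDomainType} {E : lmodType R} (M : set E) (n : nat)
  : Prop :=
  exists b : 'I_n -> E,
    (forall i, M (b i)) /\
    (forall c : 'I_n -> R, \sum_(i < n) c i *: b i = 0 -> forall i, c i = 0) /\
    (forall x, M x -> exists c : 'I_n -> R, x = \sum_(i < n) c i *: b i).

(* pi is linear on M (only its restriction to M matters) *)
Definition linear_on {R : numDomainType} {E : lmodType R} (M : set E)
  (pi : E -> R) : Prop :=
  forall (a : R) x y, M x -> M y -> pi (a *: x + y) = a * pi x + pi y.

Definition price_set {R : numDomainType} {E : lmodType R} (M : set E)
  (pi : E -> R) (A : set E) (X : E) : set R :=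
  [set pi Z | Z in [set Z | M Z /\ A (X + Z)]].

Definition rho {R : realType} {E : lmodType R} (M : set E) (pi : E -> R)
  (A : set E) (X : E) : R := inf (price_set M pi A X).

Definition optR {R : realType} {E : lmodType R} (M : set E) (pi : E -> R)
  (A : set E) (X : E) : set E :=
  [set Z | M Z /\ A (X + Z) /\ pi Z = rho M pi A X].

Definition boundary {T : topologicalType} (A : set T) : set T :=
  closure A `\` interior A.

(* Main.v *)
Require Import Defs.
From HB Require Import structures.
From mathcomp Require Import all_boot all_order all_algebra.
From mathcomp Require Import all_classical all_reals all_analysis.
From mathcomp Require Import ring lra.
Import Order.TTheory GRing.Theory Num.Theory.
Local Open Scope classical_set_scope.
Local Open Scope ring_scope.

Lemma shift_in (R : realType) (E : tvsType R) (S : set E) (P V : E) :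
  nbhs P S -> exists t : R, t < 0 /\ S (P + t *: V).
Proof.
move=> nS.
have := @add_continuous E (P, 0) S; rewrite /= addr0 => /(_ nS).
move=> [[B1 B2] /= [nB1 nB2] sub].
have := @scale_continuous R E (0, V) B2; rewrite /= scale0r => /(_ nB2).
move=> [[C1 C2] /= [nC1 nC2] sub2].
move: nC1 => /nbhs_ballP [e /= e0 He].
exists (- (e / 2)); split.
  by rewrite oppr_lt0 divr_gt0.
apply: (sub (P, - (e / 2) *: V)); split => /=.
  exact: nbhs_singleton.
apply: (sub2 (- (e/2), V)); split => /=; last exact: nbhs_singleton.
apply: He; rewrite /ball /= sub0r opprK ger0_norm ?divr_ge0 ?ltW //.
by rewrite ltr_pdivrMr // ltr_pMr // ltr1n.

Qed.
Theorem mainTheorem13 (R : realType) (E : tvsType R)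
  (ge : E -> E -> Prop) (M : set E) (pi : E -> R) (A : set E)
  (hE : hausdorff_space E) (fcE : first_countable E)
  (hge : partial_order ge)
  (hM : is_subspace M) (hdim : exists n, (1 < n)%N /\ has_dim M n)
  (hpi : linear_on M pi)
  (A1 : exists U, M U /\ pos_cone ge U /\ pi U = 1)
  (A2_closed : closed A) (A2_0 : A 0) (A2_ne : A <> setT)
  (A2_mono : forall a p, A a -> pos_cone ge p -> A (a + p))
  (A3_fin : forall X, price_set M pi A X !=set0 /\ has_lbound (price_set M pi A X))
  (A3_cont : continuous (fun X : E => (rho M pi A X : R^o)))
  (hR : forall X, optR M pi A X !=set0)
  (hstrict : forall X Y, X <> Y -> boundary A X -> boundary A Y ->
     M (X - Y) -> pi (X - Y) = 0 ->
     exists l : R, 0 < l < 1 /\ interior A (l *: X + (1 - l) *: Y)) :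
  forall X, exists Z, optR M pi A X = [set Z].
Proof.
move=> X.
have [U [MU [_ piU]]] := A1.
have notint : forall W, M W -> pi W = rho M pi A X -> ~ nbhs (X + W) A.
  move=> W MW piW nW.
  have [t [t0 At]] := @shift_in R E A (X + W) U nW.
  have MZ : M (t *: U + W) by exact: hM.2.
  have hle := ge_inf (A3_fin X).2.
  have : rho M pi A X <= pi (t *: U + W).
    apply: hle; exists (t *: U + W) => //; split => //.
    by rewrite addrCA addrC.
  rewrite hpi // piU mulr1 piW; lra.
have [Z0 [MZ0 [AZ0 piZ0]]] := hR X.
exists Z0; apply/seteqP; split; last by move=> z ->; split.
move=> Z1 [MZ1 [AZ1 piZ1]] /=; case: (pselect (Z1 = Z0)) => // neq; exfalso.
have MN : forall a Z, M Z -> M (a *: Z) by move=> a Z MZ; rewrite -[_ *: _]addr0; apply: hM.2 => //; exact: hM.1.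
have piN : forall a Z, M Z -> pi (a *: Z) = a * pi Z.
  move=> a Z MZ; have := hpi a Z 0 MZ hM.1; rewrite addr0 => ->.
  have := hpi 1 0 0 hM.1 hM.1; rewrite scale1r addr0 mul1r; lra.
have bd : forall Z, M Z -> A (X + Z) -> pi Z = rho M pi A X -> boundary A (X + Z).
  move=> Z MZ AZ piZ; split; first exact: subset_closure.
  exact: notint.
have hd : X + Z1 - (X + Z0) = (-1) *: Z0 + Z1.
  by rewrite scaleN1r opprD addrACA subrr add0r addrC.
have [l [/andP [l0 l1] hint]] := hstrict (X + Z1) (X + Z0)
  (fun h => neq (addrI X h)) (bd _ MZ1 AZ1 piZ1) (bd _ MZ0 AZ0 piZ0)
  (ltac:(rewrite hd; exact: hM.2))
  (ltac:(rewrite hd hpi // piZ0 piZ1; lra)).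
have MW : M (l *: Z1 + (1 - l) *: Z0) by apply: hM.2 => //; exact: MN.
apply: (notint _ MW); last first.
  by move: hint; rewrite !scalerDr addrACA -scalerDl [l + _]addrC subrK scale1r.
rewrite hpi // ?piN // -?piZ0 ?piZ1.
by rewrite piZ0; ring.
exact: MN.
Qed.
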